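(* Let $Z$ and $V$ be real Banach spaces, where the norm of $Z$ is Fréchet differentiable away from zero. Let $D \subset Z$ be open, $r \in Z$, and let $F: D \to V$ be semismooth at $z \in D$, $z \neq r$, with Newton derivative $H_F$. Let $p \ge 1$ and $\sigma \ge 0$, and define $$M(z;r) = \left(\frac{1}{\|z-r\|_Z^p} + \sigma\right)\mathcal{I}_V,$$ where $\mathcal{I}_V$ is the identity on $V$. Then $G(z) = M(z;r)F(z)$ is also semismooth at $z$, with Newton derivative acting by $$H_G(z)h = \left(\sigma + \frac{1}{\|z-r\|_Z^p}\right)H_F(z)h - p\,\frac{\langle z^*, h\rangle_{Z^*,Z}}{\|z-r\|_Z^{p+1}}\,F(z),$$ where $z^* \in Z^*$ is the derivative of the norm $\|\cdot\|_Z$ at $z - r$, i.e.\ satisfies $\|z^*\|_{Z^*} \le 1$ and $\langle z^*, z-r\rangle_{Z^*,Z} = \|z-r\|_Z$.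
   Context: Semismoothness: $F: D \subset Z \to V$ ($D$ open) is semismooth at $z \in D$ if it is locally Lipschitz continuous at $z$ and there exist an open neighbourhood $N \subset D$ containing $z$ and a mapping $H: D \to L(Z,V)$ (a Newton derivative) such that $F(w+h) - F(w) - H(w+h)h = o(\|h\|_Z)$ as $h \to 0$, for all $w \in N$. The paper assumes throughout that the norm on $Z$ is Fréchet differentiable away from zero. *)

(* Defs.v *)
From HB Require Import structures.
From mathcomp Require Import all_boot all_order all_algebra.
From mathcomp Require Import all_classical all_reals all_analysis.
Set Implicit Arguments. Unset Strict Implicit. Unset Printing Implicit Defensive.
Import Order.TTheory GRing.Theory Num.Theory.
Import numFieldNormedType.Exports.
Local Open Scope classical_set_scope.
Local Open Scope ring_scope.

Section Semismooth.
Context {R : realType} {Z V : normedModType R}.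

Definition locally_lipschitz_at (D : set Z) (F : Z -> V) (z : Z) : Prop :=
  exists2 eps : R, 0 < eps &
    (forall x, `|x - z| < eps -> D x) /\
    exists L : R, forall x y : Z, `|x - z| < eps -> `|y - z| < eps ->
      `|F x - F y| <= L * `|x - y|.

Definition bounded_linear (T : Z -> V) : Prop := linear T /\ continuous T.

Definition newton_derivative_near (D : set Z) (F : Z -> V) (z : Z)
    (H : Z -> Z -> V) : Prop :=
  exists N : set Z, [/\ open N, N z, N `<=` D &
    forall w, N w -> forall eps : R, 0 < eps ->
      exists2 delta : R, 0 < delta & forall h : Z, `|h| < delta ->
        `|F (w + h) - F w - H (w + h) h| <= eps * `|h| ].

Definition semismooth_with (D : set Z) (F : Z -> V) (z : Z)
    (H : Z -> Z -> V) : Prop :=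
  [/\ D z, locally_lipschitz_at D F z,
      (forall w, D w -> bounded_linear (H w)) &
      newton_derivative_near D F z H].

End Semismooth.

(* Main.v *)
Require Import Defs.
From HB Require Import structures.
From mathcomp Require Import all_boot all_order all_algebra.
From mathcomp Require Import all_classical all_reals all_analysis.
From mathcomp Require Import ring lra.
Set Implicit Arguments. Unset Strict Implicit. Unset Printing Implicit Defensive.
Import Order.TTheory GRing.Theory Num.Theory.
Import numFieldNormedType.Exports.
Local Open Scope classical_set_scope.
Local Open Scope ring_scope.

Lemma diff_eps (R : realType) (V W : normedModType R) (f : V -> W) (y : V) :
  differentiable f y -> forall e : R, 0 < e ->
  exists2 d : R, 0 < d & forall h : V, `|h| < d ->
    `|f (y + h) - f y - 'd f y h| <= e * `|h|.
Proof.
move=> df e e0.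
have /eqaddoP/(_ e e0) := diff_locally df.
move=> /nbhs_norm0P [d d0 Hd]; exists d => // h hd.
have := Hd h hd; rewrite /=.
by rewrite (addrC y h) opprD addrA.
Qed.

Lemma diff_cont_any (R : realType) (V W : normedModType R) (f : V -> W) (y : V) :
  continuous ('d f y).
Proof.
rewrite /diff.
set P := (fun df : {linear V -> W} => _).
have [ex|nex] := pselect (exists df, P df).
  by have [] := xgetPex point ex.
rewrite xgetPN; last by move=> x Px; apply: nex; exists x.
by move=> x; apply: cvg_cst.
Qed.

Lemma norm_subgrad (R : realType) (Z : normedModType R) (y : Z) :
  differentiable (fun x : Z => `|x| : R) y ->
  forall k, 'd (fun x : Z => `|x| : R) y k <= `|y + k| - `|y|.
Proof.
move=> dN k.
set L := 'd (fun x : Z => `|x| : R) y.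
apply/ler_addgt0Pr => e e0.
have k1 : 0 < `|k| + 1 by rewrite ltr_wpDl.
have [d d0 Hd] := diff_eps dN (divr_gt0 e0 k1).
set t := d / (d + 2 * `|k|).
have dk : 0 < d + 2 * `|k| by rewrite ltr_wpDr // mulr_ge0.
have t0 : 0 < t by rewrite divr_gt0.
have t1 : t <= 1 by rewrite ler_pdivrMr // mul1r lerDl mulr_ge0.
have tE : t * (d + 2 * `|k|) = d by rewrite /t divfK // gt_eqF.
clearbody t.
have tk : `|t *: k| < d.
  rewrite normrZ ger0_norm ?ltW //.
  have := normr_ge0 k; nra.
have H1 := Hd _ tk.
have HL : L (t *: k) = t * L k by rewrite linearZ.
have Hc : `|y + t *: k| <= (1 - t) * `|y| + t * `|y + k|.
  have -> : y + t *: k = (1 - t) *: y + t *: (y + k).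
    by rewrite scalerDr scalerBl scale1r addrA subrK.
  apply: le_trans (ler_normD _ _) _.
  by rewrite !normrZ !ger0_norm ?subr_ge0 // ltW.
have : t * L k <= t * (`|y + k| - `|y| + e / (`|k| + 1) * `|k|).
  rewrite -HL; move: H1; rewrite normrZ (ger0_norm (ltW t0)) ler_norml.
  case/andP => H1 _.
  move: H1 Hc; set a := L _; set b := `|y + t *: k|; set c := e / _.
  move=> H1 Hc; nra.
rewrite ler_pM2l // => H.
apply: le_trans H _; rewrite lerD2l.
by rewrite mulrAC ler_pdivrMr // ler_pM2l // lerDl.
Qed.

Section NormLemmas.
Variables (R : realType) (Z : normedModType R).
Local Notation N := (fun x : Z => `|x| : R).
Hypothesis nd : forall x : Z, x != 0 -> differentiable N x.

Lemma norm_dbound (y : Z) : y != 0 -> forall k, `|'d N y k| <= `|k|.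
Proof.
move=> y0 k; rewrite ler_norml; apply/andP; split.
  have := norm_subgrad (nd y0) (- k); rewrite linearN.
  have := lerB_dist (y - k) y; rewrite addrAC subrr add0r normrN.
  move=> a b; lra.
have := norm_subgrad (nd y0) k.
have := lerB_dist (y + k) y; rewrite addrAC subrr add0r.
move=> a b; lra.
Qed.

Lemma norm_newton (y : Z) : y != 0 -> forall e : R, 0 < e ->
  exists2 d : R, 0 < d & forall h : Z, `|h| < d ->
   y + h != 0 /\ `| `|y + h| - `|y| - 'd N (y + h) h| <= e * `|h|.
Proof.
move=> y0 e e0.
have e4 : 0 < e / 4 by rewrite divr_gt0.
have [d0 d00 Hd0] := diff_eps (nd y0) e4.
have y0' : 0 < `|y| by rewrite normr_gt0.
exists (Num.min (d0 / 2) `|y|); first by rewrite lt_min y0' divr_gt0.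
move=> h; rewrite lt_min => /andP[hd hy].
have u0 : y + h != 0.
  apply/negP => /eqP yh; move: hy; rewrite -[h](addKr y) yh addr0 normrN.
  by rewrite ltxx.
split => //.
have b1 := norm_subgrad (nd u0) (- h).
rewrite linearN -addrA subrr addr0 in b1.
have b2 := norm_subgrad (nd u0) h.
have hd0 : `|h| < d0 by move: hd; rewrite ltr_pdivlMr //; have := normr_ge0 h; lra.
have E1 := Hd0 h hd0.
have h2 : `|h + h| < d0.
  apply: le_lt_trans (ler_normD _ _) _.
  move: hd; rewrite ltr_pdivlMr // => hd; lra.
have E2 := Hd0 _ h2.
rewrite linearD addrA in E2.
have hh : `|h + h| <= `|h| + `|h| by apply: ler_normD.
move: E1 E2 b1 b2; rewrite -addrA.
set A := `|y + h|; set Y := `|y|; set l := 'd N y h; set l' := 'd N (y + h) h.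
set B := `|y + (h + h)|.
move=> E1 E2 b1 b2; move: E1 E2; rewrite !ler_norml.
case/andP=> E1 E1'; case/andP=> E2 E2'.
have H0 := normr_ge0 h.
have : e / 4 * `|h + h| <= e / 4 * (`|h| + `|h|) by rewrite ler_pM2l.
move=> hh'.
apply/andP; split; nra.
Qed.

End NormLemmas.

Section Phi.
Variables (R : realType) (p : R).
Definition phi (t : R) := (t `^ p)^-1.
Definition dphi (t : R) := - (p / t `^ (p + 1)).

Lemma phi_derive (x : R) : 0 < x -> is_derive x 1 phi (dphi x).
Proof.
move=> x0.
have px : x `^ p != 0 by rewrite gt_eqF // powR_gt0.
have H := @is_deriveV R (fun y : R => y `^ p) x _ _ px (is_derive1_powR p x0). rewrite /phi; apply: is_derive_eq H _.
rewrite /dphi (@powRD _ x p 1); last by apply/implyP => _; rewrite gt_eqF.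
rewrite (@powRB _ x p 1); last by apply/implyP => _; rewrite gt_eqF.
rewrite powRr1 ?ltW // /GRing.scale /=.
have xn0 : x != 0 by rewrite gt_eqF.
field. by rewrite px xn0.
Qed.

Lemma powR_cont (x q : R) : 0 < x -> {for x, continuous (fun y : R => y `^ q)}.
Proof.
move=> x0; apply: differentiable_continuous; apply/derivable1_diffP.
by apply: derivable_powR; rewrite in_itv /= x0.
Qed.

Lemma dphi_cont (x : R) : 0 < x -> {for x, continuous dphi}.
Proof.
move=> x0; rewrite /dphi.
apply: continuousN.
apply: continuousM; first exact: cvg_cst.
apply: continuousV; first by rewrite gt_eqF // powR_gt0.
exact: powR_cont.
Qed.

Lemma phi_cont (x : R) : 0 < x -> {for x, continuous phi}.
Proof.
move=> x0; apply: differentiable_continuous; apply/derivable1_diffP.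
by have [] := phi_derive x0.
Qed.

Lemma phi_mvt_le (a b : R) : 0 < a -> a <= b ->
  exists2 c, a <= c <= b & phi b - phi a = dphi c * (b - a).
Proof.
move=> a0 ab.
have [c cab E] : exists2 c, c \in `[a, b] & phi b - phi a = dphi c * (b - a).
  apply: MVT_segment => //.
- move=> x; rewrite in_itv /= => /andP[ax _]; apply: phi_derive.
  exact: lt_trans ax.
- apply: continuous_in_subspaceT => x; rewrite inE /= in_itv /= => /andP[ax _].
  by apply: phi_cont; apply: lt_le_trans ax.
- by exists c => //; move: cab; rewrite in_itv.
Qed.

Lemma phi_mvt (a b : R) : 0 < a -> 0 < b ->
  exists2 c, (a <= c <= b) || (b <= c <= a) & phi b - phi a = dphi c * (b - a).
Proof.
move=> a0 b0; case: (leP a b) => ab.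
  by have [c cab E] := phi_mvt_le a0 ab; exists c => //; rewrite cab.
have [c cab E] := phi_mvt_le b0 (ltW ab); exists c; first by rewrite cab orbT.
by rewrite -opprB E -mulrN opprB.
Qed.

Lemma near_ball_R (a : R) (P : R -> Prop) : (\forall t \near a, P t) ->
  exists2 d : R, 0 < d & forall t, `|t - a| < d -> P t.
Proof.
move=> /nbhs_normP [d d0 Hd]; exists d => // t ta; apply: Hd.
by rewrite /= distrC.
Qed.

Lemma phi_newton (a : R) : 0 < a -> forall e : R, 0 < e ->
  exists2 d : R, 0 < d & forall b, `|b - a| < d ->
    0 < b /\ `|phi b - phi a - dphi b * (b - a)| <= e * `|b - a|.
Proof.
move=> a0 e e0.
have /cvgrPdist_lt /(_ (e / 2)) := dphi_cont a0.
move=> /(_ (divr_gt0 e0 (ltr0Sn _ 1))) /near_ball_R [d d0 Hd].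
exists (Num.min d a); first by rewrite lt_min d0 a0.
move=> b; rewrite lt_min => /andP[bd ba].
have b0 : 0 < b.
  move: ba; rewrite ltr_norml => /andP[h _]; lra.
split => //.
have [c cab E] := phi_mvt a0 b0.
have ca : `|c - a| < d.
  apply: le_lt_trans bd.
  case/orP: cab => /andP[h1 h2].
    by rewrite !ger0_norm ?subr_ge0 //; [lra | lra].
  by rewrite !ler0_norm ?subr_le0 //; [lra | lra].
have h1 := Hd c ca; have h2 := Hd b bd.
rewrite E -mulrBl normrM; apply: ler_wpM2r => //.
have := ler_distD (dphi a) (dphi c) (dphi b).
move=> h3; rewrite (distrC (dphi a) (dphi c)) in h1; lra.
Qed.

Lemma powV_anti (al a q : R) : 0 < al -> al <= a -> 0 <= q ->
  (a `^ q)^-1 <= (al `^ q)^-1.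
Proof.
move=> al0 ala q0.
have a0 : 0 < a by apply: lt_le_trans ala.
rewrite lef_pV2 ?posrE ?powR_gt0 //.
by apply: ge0_ler_powR => //; rewrite nnegrE ltW.
Qed.

Lemma dphi_bound (al c : R) : 0 < al -> al <= c -> 0 <= p ->
  `|dphi c| <= p / al `^ (p + 1).
Proof.
move=> al0 alc p0.
have c0 : 0 < c by apply: lt_le_trans alc.
rewrite /dphi normrN normrM normrV ?unitfE ?gt_eqF ?powR_gt0 //.
rewrite !ger0_norm ?powR_ge0 //.
apply: ler_wpM2l => //; apply: powV_anti => //; lra.
Qed.

Lemma phi_lip (al a b : R) : 0 < al -> 0 <= p -> al <= a -> al <= b ->
  `|phi b - phi a| <= p / al `^ (p + 1) * `|b - a|.
Proof.
move=> al0 p0 ala alb.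
have a0 : 0 < a by apply: lt_le_trans ala.
have b0 : 0 < b by apply: lt_le_trans alb.
have [c cab E] := phi_mvt a0 b0.
rewrite E normrM; apply: ler_wpM2r => //; apply: dphi_bound => //.
by case/orP: cab => /andP[h1 h2]; [apply: le_trans h1 | apply: le_trans h1].
Qed.
End Phi.

Section Combined.
Variables (R : realType) (Z : normedModType R) (p : R).
Local Notation N := (fun x : Z => `|x| : R).
Hypothesis nd : forall x : Z, x != 0 -> differentiable N x.
Hypothesis p0 : 0 <= p.

Lemma phinorm_newton (y : Z) : y != 0 -> forall e : R, 0 < e ->
  exists2 d : R, 0 < d & forall h : Z, `|h| < d ->
   y + h != 0 /\
   `|phi p `|y + h| - phi p `|y| - dphi p `|y + h| * 'd N (y + h) h|
     <= e * `|h|.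
Proof.
move=> y0 e e0.
set a := `|y|.
have a0 : 0 < a by rewrite normr_gt0.
have a2 : 0 < a / 2 by rewrite divr_gt0.
set Q := p / (a / 2) `^ (p + 1).
have Q0 : 0 <= Q by rewrite divr_ge0 ?powR_ge0.
have e2 : 0 < e / 2 by rewrite divr_gt0.
have e3 : 0 < e / (2 * (Q + 1)) by rewrite divr_gt0 // mulr_gt0 //; lra.
have [d1 d10 H1] := phi_newton p a0 e2.
have [d2 d20 H2] := norm_newton nd y0 e3.
exists (Num.min d1 (Num.min d2 (a / 2))).
  by rewrite !lt_min d10 d20 a2.
move=> h; rewrite !lt_min => /andP[hd1 /andP[hd2 ha]].
have [u0 Hn] := H2 h hd2.
split => //.
set b := `|y + h|.
have ba : `|b - a| <= `|h|.
  by have := ler_dist_dist (y + h) y; rewrite addrAC subrr add0r.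
have [b0 Hp] := H1 b (le_lt_trans ba hd1).
have bge : a / 2 <= b.
  have := lerB_dist y (- h); rewrite opprK normrN -/b -/a.
  move: ha; lra.
have Hq := @dphi_bound _ p _ _ a2 bge p0.
set l := 'd N (y + h) h.
have -> : phi p b - phi p a - dphi p b * l =
   (phi p b - phi p a - dphi p b * (b - a)) + dphi p b * (b - a - l).
  by ring.
apply: le_trans (ler_normD _ _) _.
rewrite normrM.
have t1 : `|phi p b - phi p a - dphi p b * (b - a)| <= e / 2 * `|h|.
  apply: le_trans Hp _; apply: ler_wpM2l => //; lra.
have t2 : `|dphi p b| * `|b - a - l| <= Q * (e / (2 * (Q + 1)) * `|h|).
  by apply: ler_pM => //.
have t3 : Q * (e / (2 * (Q + 1)) * `|h|) <= e / 2 * `|h|.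
  rewrite mulrA ler_wpM2r //.
  have qn0 : 2 * (Q + 1) != 0 by rewrite mulf_neq0 // gt_eqF //; lra.
  have kE := mulVf qn0.
  move: kE; set k := (2 * (Q + 1))^-1 => kE.
  have k0 : 0 < k by rewrite invr_gt0 mulr_gt0 //; lra.
  have ek : 0 < e * k by rewrite mulr_gt0.
  nra.
lra.
Qed.
End Combined.

Lemma grp6 (V : zmodType) (p1 p2 p3 q r1 r2 : V) :
  p1 - q - (p3 - r1) = p1 - p2 - p3 + (p2 - q + r2) + (r1 - r2).
Proof.
rewrite !addrA (addrAC p1 (- p2) (- p3)) (addrNK p2).
by rewrite (addrAC _ r2 r1) addrK opprB addrA (addrAC (p1 - q) r1 (-p3)) (addrAC p1 (-q) (-p3)).
Qed.

Lemma ident6 (R : realType) (V : lmodType R) (X Y c : R) (Fu Fw Hh : V) :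
  X *: Fu - Y *: Fw - (X *: Hh - c *: Fu) =
  X *: (Fu - Fw - Hh) + (X - Y + c) *: Fw + c *: (Fu - Fw).
Proof. by rewrite !scalerBr !scalerDl scaleNr; exact: grp6. Qed.

Lemma lin_aux (R : realType) (V : lmodType R) (a c p K l1 l2 : R) (X Y W : V) :
  c *: (a *: X + Y) - (p * (a * l1 + l2) / K) *: W =
  a *: (c *: X - (p * l1 / K) *: W) + (c *: Y - (p * l2 / K) *: W).
Proof.
have -> : p * (a * l1 + l2) / K = a * (p * l1 / K) + p * l2 / K by ring.
rewrite scalerDr (scalerA c a) (mulrC c a) -(scalerA a c).
by rewrite scalerDl -scalerA scalerBr opprD addrACA.
Qed.

Unset Implicit Arguments.

Theorem mainTheorem2 (R : realType) (Z V : completeNormedModType R)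
  (normZ_diff : forall x : Z, x != 0 -> differentiable (fun y : Z => `|y| : R) x)
  (D : set Z) (hD : open D) (r z : Z) (F : Z -> V) (HF : Z -> Z -> V)
  (zr : z != r) (p sigma : R) (hp : 1 <= p) (hs : 0 <= sigma) :
  semismooth_with D F z HF ->
  semismooth_with D (fun w => ((`|w - r| `^ p)^-1 + sigma) *: F w) z
    (fun w h => (sigma + (`|w - r| `^ p)^-1) *: HF w h
       - (p * ('d (fun y : Z => `|y| : R) (w - r) h) / `|w - r| `^ (p + 1))
         *: F w).
Proof.
move=> [Dz [eL eL0 [ballD [L HL]]] HFlin [NF [oNF NFz NFD Hnew]]].
have p0 : 0 <= p by apply: le_trans hp.
set r0 := `|z - r|.
have r00 : 0 < r0 by rewrite normr_gt0 subr_eq0.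
have r02 : 0 < r0 / 2 by rewrite divr_gt0.
have far : forall x, `|x - z| < r0 / 2 -> r0 / 2 <= `|x - r|.
  move=> x xz; have := ler_distD x z r; rewrite -/r0 (distrC z x); lra.
set rho := Num.min eL (r0 / 2).
have rho0 : 0 < rho by rewrite lt_min eL0 r02.
set M1 := phi p (r0 / 2) + sigma.
set K1 := p / (r0 / 2) `^ (p + 1).
have K10 : 0 <= K1 by rewrite divr_ge0 ?powR_ge0.
have mbound : forall x, `|x - z| < r0 / 2 ->
    0 <= phi p `|x - r| + sigma <= M1.
  move=> x xz; apply/andP; split.
    by apply: addr_ge0 => //; rewrite /phi invr_ge0 powR_ge0.
  by rewrite lerD2r; apply: powV_anti => //; apply: far.
split => //.
- exists rho => //; split.
    by move=> x; rewrite lt_min => /andP[xe _]; apply: ballD.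
  set B := `|F z| + `|L| * eL.
  exists (M1 * `|L| + K1 * B) => x y.
  rewrite !lt_min => /andP[xe xr] /andP[ye yr].
  set mx := phi p `|x - r| + sigma; set my := phi p `|y - r| + sigma.
  change (`|mx *: F x - my *: F y| <= (M1 * `|L| + K1 * B) * `|x - y|).
  have -> : mx *: F x - my *: F y = mx *: (F x - F y) + (mx - my) *: F y.
    by rewrite scalerBr scalerBl addrA subrK.
  apply: le_trans (ler_normD _ _) _; rewrite !normrZ.
  have /andP[mx0 mxM] := mbound x xr.
  have hF : `|F x - F y| <= `|L| * `|x - y|.
    apply: le_trans (HL x y xe ye) _; apply: ler_wpM2r => //; exact: ler_norm.
  have hm : `|mx - my| <= K1 * `|x - y|.
    have -> : mx - my = phi p `|x - r| - phi p `|y - r| by rewrite /mx /my; ring.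
    apply: le_trans (phi_lip r02 p0 (far y yr) (far x xr)) _.
    apply: ler_wpM2l => //.
    by have := ler_dist_dist (x - r) (y - r); rewrite opprB addrA subrK.
  have hFy : `|F y| <= B.
    have -> : F y = F z + (F y - F z) by rewrite addrC subrK.
    apply: le_trans (ler_normD _ _) _; rewrite lerD2l.
    have zz : `|z - z| < eL by rewrite subrr normr0.
    have h1 : L * `|y - z| <= `|L| * `|y - z|.
      by apply: ler_wpM2r => //; exact: ler_norm.
    have h2 : `|L| * `|y - z| <= `|L| * eL.
      by apply: ler_wpM2l => //; apply: ltW.
    exact: le_trans (HL y z ye zz) (le_trans h1 h2).
  have B0 : 0 <= B by rewrite addr_ge0 // mulr_ge0 // ltW.
  rewrite (ger0_norm mx0) [in leRHS]mulrDl.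
  apply: lerD.
    rewrite -mulrA; apply: ler_pM => //; exact: normr_ge0.
  rewrite mulrAC; apply: ler_pM => //; exact: normr_ge0.
- move=> w Dw; have [lin cont] := HFlin w Dw; split.
  + move=> a u v /=.
    have dl : 'd (fun y : Z => `|y| : R) (w - r) (a *: u + v) = a * 'd (fun y : Z => `|y| : R) (w - r) u + 'd (fun y : Z => `|y| : R) (w - r) v by rewrite linearP.
    have hl : HF w (a *: u + v) = a *: HF w u + HF w v := lin a u v.
    rewrite hl dl; exact: lin_aux.
  + move=> x.
    apply: (@continuousB _ _ _ (fun h => _ *: HF w h) (fun h => (_ * _ h / _) *: F w)).
      by apply: continuousZl_tmp; apply: cont.
    apply: continuousZr_tmp.
    apply: continuousM; last exact: cvg_cst.
    apply: continuousM; first exact: cvg_cst.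
    exact: diff_cont_any.
- exists (NF `&` ball z rho); split.
  + by apply: openI => //; exact: ball_open.
  + by split => //; exact: ballxx.
  + by move=> x [NFx _]; exact: NFD.
  move=> w [NFw bw] e e0.
  have wz : `|w - z| < rho by move: bw; rewrite -ball_normE /= distrC.
  have := wz; rewrite lt_min => /andP[wze wzr].
  set y := w - r.
  have yfar : r0 / 2 <= `|y| := far w wzr.
  have y0 : y != 0 by rewrite -normr_gt0; apply: lt_le_trans yfar.
  have e3 : 0 < e / 3 by rewrite divr_gt0.
  have M10 : 0 <= M1.
    have zz : `|z - z| < r0 / 2 by rewrite subrr normr0.
    by have /andP[h1 h2] := mbound z zz; apply: le_trans h2.
  have Fw0 : 0 <= `|F w| by [].
  have [d1 d10 H1] := Hnew w NFw (e / 3 / (M1 + 1)) (divr_gt0 e3 (ltr_wpDl M10 ltr01)).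
  have [d2 d20 H2] := phinorm_newton normZ_diff p0 y0 (divr_gt0 e3 (ltr_wpDl Fw0 ltr01)).
  have KL0 : 0 <= K1 * `|L| by rewrite mulr_ge0.
  set d3 := rho - `|w - z|.
  have d30 : 0 < d3 by rewrite subr_gt0.
  set d4 := e / 3 / (K1 * `|L| + 1).
  have d40 : 0 < d4 by rewrite divr_gt0 // ltr_wpDl.
  exists (Num.min d1 (Num.min d2 (Num.min d3 d4))).
    by rewrite !lt_min d10 d20 d30 d40.
  move=> h; rewrite !lt_min => /andP[hd1 /andP[hd2 /andP[hd3 hd4]]].
  have hd3' : `|w + h - z| < rho.
    rewrite addrAC; apply: le_lt_trans (ler_normD _ _) _.
    by move: hd3; rewrite /d3 ltrBrDl addrC.
  have /andP[uze uzr] : (`|w + h - z| < eL) && (`|w + h - z| < r0 / 2).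
    by rewrite -lt_min.
  have ur : w + h - r = y + h by rewrite /y addrAC.
  have [yh0 Hphi] := H2 h hd2.
  have Hn := H1 h hd1.
  rewrite [sigma + _]addrC.
  set b := `|w + h - r|.
  set l := 'd (fun y0 : Z => `|y0| : R) (w + h - r) h.
  set X := (b `^ p)^-1 + sigma.
  set Y := (`|w - r| `^ p)^-1 + sigma.
  set c := p * l / b `^ (p + 1).
  rewrite ident6.
  have bfar : r0 / 2 <= b := far _ uzr.
  have hc : `|c| <= K1 * `|h|.
    have -> : c = - dphi p b * l by rewrite /dphi /c opprK mulrAC.
    rewrite normrM normrN; apply: ler_pM => //.
      exact: dphi_bound.
    by rewrite /l ur; apply: norm_dbound.
  have hX : `|X| <= M1.
    by have /andP[h1 h2] := mbound _ uzr; rewrite ger0_norm.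
  have hXY : `|X - Y + c| <= e / 3 / (`|F w| + 1) * `|h|.
    have -> : X - Y + c = phi p `|y + h| - phi p `|y| - dphi p `|y + h| * 'd (fun y0 : Z => `|y0| : R) (y + h) h.
      by rewrite /X /Y /c /b /l ur /phi /dphi /y; ring.
    exact: Hphi.
  have hFF : `|F (w + h) - F w| <= `|L| * `|h|.
    apply: le_trans (HL _ _ uze wze) _; rewrite addrAC subrr add0r.
    by apply: ler_wpM2r => //; exact: ler_norm.
  apply: le_trans (ler_normD _ _) _.
  apply: le_trans (lerD (ler_normD _ _) (lexx _)) _.
  rewrite !normrZ.
  have t1 : `|X| * `|F (w + h) - F w - HF (w + h) h| <= e / 3 * `|h|.
    apply: le_trans (ler_pM (normr_ge0 _) (normr_ge0 _) hX Hn) _.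
    rewrite mulrA ler_wpM2r // mulrCA ger_pMr // ler_pdivrMr ?ltr_wpDl //.
    by rewrite mul1r lerDl.
  have t2 : `|X - Y + c| * `|F w| <= e / 3 * `|h|.
    rewrite mulrC; apply: le_trans (ler_wpM2l Fw0 hXY) _.
    rewrite mulrA ler_wpM2r // mulrCA ger_pMr // ler_pdivrMr ?ltr_wpDl //.
    by rewrite mul1r lerDl.
  have t3 : `|c| * `|F (w + h) - F w| <= e / 3 * `|h|.
    apply: le_trans (ler_pM (normr_ge0 _) (normr_ge0 _) hc hFF) _.
    have -> : K1 * `|h| * (`|L| * `|h|) = (K1 * `|L| * `|h|) * `|h| by ring.
    apply: ler_wpM2r => //.
    apply: le_trans (_ : K1 * `|L| * d4 <= _).
      by apply: ler_wpM2l => //; apply: ltW.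
    rewrite /d4 mulrCA ger_pMr // ler_pdivrMr ?ltr_wpDl //.
    by rewrite mul1r lerDl.
  move: t3; rewrite /c !normrM => t3; lra.
Qed.
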